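(* Let $F\in\mathbb{R}[x_1,\dots,x_n]$ be a form. If there is a positive integer $k$ such that every form in $\mathrm{SDS}^{(k)}(F)$ has all coefficients nonnegative, then $F(X)\ge0$ for all $X\in\mathbb{R}_+^n$. If there is a positive integer $k$ and a form $G\in\mathrm{SDS}^{(k)}(F)$ with $G(1,\dots,1)<0$, then $F$ is not nonnegative on $\mathbb{R}_+^n$ (there is $X\in\mathbb{R}_+^n$ with $F(X)<0$).
   Context: $\mathbb{R}_+^n=\{(x_1,\dots,x_n): x_i\ge0\}$. $W_n$ is the $n\times n$ matrix with $(W_n)_{ij}=1/j$ for $i\le j$ and $0$ for $i>j$. For a permutation $[k_1\cdots k_n]$ of $1,\dots,n$, $P_{[k_1\cdots k_n]}$ is the permutation matrix with $1$ in positions $(i,k_i)$ and $0$ elsewhere, and $B_{[k_1\cdots k_n]}=P_{[k_1\cdots k_n]}W_n$; $PW_n$ denotes the set of these $n!$ matrices. For $m\ge1$, $\mathrm{SDS}^{(m)}(F)$ is the set of forms $F(B_{[\alpha_1]}\cdots B_{[\alpha_m]}X^{\mathrm{Tr}})$, $X=(x_1,\dots,x_n)$, as $B_{[\alpha_1]},\dots,B_{[\alpha_m]}$ range independently over $PW_n$. *)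

(* Defs.v *)
From mathcomp Require Import all_boot all_order all_algebra all_fingroup.
From mathcomp Require Export mpoly.
Set Implicit Arguments. Unset Strict Implicit. Unset Printing Implicit Defensive.
Import GRing.Theory Num.Theory.
Local Open Scope ring_scope.

(* W_n : (W_n)_{ij} = 1/j for i <= j, 0 otherwise (1-indexed);
   with 0-indexed ordinals this is 1/(j+1) for i <= j. *)
Definition Wmx (R : fieldType) (n : nat) : 'M[R]_n :=
  \matrix_(i < n, j < n) (if (i <= j)%N then (j.+1)%:R^-1 else 0).

(* P_[k_1..k_n] has a 1 at position (i, k_i): this is perm_mx s with s i = k_i. *)
Definition Bmx (R : fieldType) (n : nat) (s : 'S_n) : 'M[R]_n :=
  perm_mx s *m Wmx R n.

Definition Bprod (R : fieldType) (n : nat) (ss : seq 'S_n) : 'M[R]_n :=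
  foldr (fun s M => Bmx R s *m M) 1%:M ss.

Definition lin_subst (R : fieldType) (n : nat) (M : 'M[R]_n) (F : {mpoly R[n]})
  : {mpoly R[n]} :=
  F \mPo [tuple \sum_(j < n) M i j *: 'X_j | i < n].

Definition in_SDS (R : fieldType) (n m : nat) (F G : {mpoly R[n]}) : Prop :=
  exists ss : seq 'S_n, size ss = m /\ G = lin_subst (Bprod R ss) F.

(* Main.v *)
Require Import Defs.
From mathcomp Require Import all_boot all_order all_algebra all_fingroup.
From mathcomp Require Import mpoly.
Import Order.TTheory GRing.Theory Num.Theory.
Local Open Scope ring_scope.

Lemma eval_lin (R : realFieldType) (n : nat) (M : 'M[R]_n) (F : {mpoly R[n]}) v :
  (lin_subst M F).@[v] = F.@[fun i => \sum_j M i j * v j].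
Proof.
rewrite /lin_subst comp_mpoly_meval; apply: meval_eq => i.
rewrite tnth_mktuple raddf_sum; apply: eq_bigr => j _.
exact: (etrans (mevalZ v _ _) (congr1 _ (mevalXU v j))).
Qed.

Lemma eval_ge0 (R : realFieldType) (n : nat) (G : {mpoly R[n]}) v :
  (forall m, 0 <= G@_m) -> (forall i, 0 <= v i) -> 0 <= G.@[v].
Proof.
move=> hG hv; rewrite mevalE; apply: sumr_ge0 => m _.
apply: mulr_ge0 => //; apply: prodr_ge0 => i _; exact: exprn_ge0.
Qed.

Lemma Bprod_ge0 (R : realFieldType) (n : nat) (ss : seq 'S_n) i j :
  0 <= Bprod R ss i j.
Proof.
elim: ss i j => [|s ss IH] i j /=.
  by rewrite mxE; case: (i == j); rewrite ?ler0n.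
rewrite mxE; apply: sumr_ge0 => l _; apply: mulr_ge0 => //.
rewrite /Bmx mxE; apply: sumr_ge0 => q _; apply: mulr_ge0.
  by rewrite /perm_mx !mxE; case: (_ == _); rewrite ?ler0n.
by rewrite /Wmx mxE; case: ifP => _ //; rewrite invr_ge0 ler0n.
Qed.

Lemma coverB (R : realFieldType) (n : nat) (y : 'cV[R]_n) :
  (forall i, 0 <= y i 0) ->
  exists s : 'S_n, exists x : 'cV[R]_n, (forall i, 0 <= x i 0) /\ y = Bmx R s *m x.
Proof.
move=> hy.
pose leT := fun i j : 'I_n => y j 0 <= y i 0.
pose t := sort leT (enum 'I_n).
have memt i : i \in t by rewrite mem_sort mem_enum.
have szt : size t = n by rewrite size_sort size_enum_ord.
have ix i : (index i t < n)%N by rewrite -[X in (_ < X)%N]szt index_mem.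
pose g i := Ordinal (ix i).
have ginj : injective g.
  move=> i j /(congr1 val) /= h.
  have := nth_index i (memt j); rewrite -h nth_index //.
pose s := perm ginj.
pose u := map (fun i => y i 0) t.
pose z k := nth 0 u k.
have zs : sorted (fun a b : R => b <= a) u.
  rewrite sorted_map; apply: sort_sorted => i j; exact: le_total.
have szu : size u = n by rewrite size_map.
have zdec k l : (k <= l)%N -> (l < n)%N -> z l <= z k.
  move=> kl ln.
  have tr : transitive (fun a b : R => b <= a) by move=> a b c /= h1 h2; apply: le_trans h2 h1.
  have rf : reflexive (fun a b : R => b <= a) by move=> a /=.
  apply: (sorted_leq_nth tr rf 0 zs) => //.
  - by rewrite inE szu (leq_ltn_trans kl ln).
  - by rewrite inE szu.
have zge0 k : 0 <= z k.
  rewrite /z; case: (ltnP k n) => kn.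
    by rewrite (nth_map (Ordinal kn)) ?szt.
  by rewrite nth_default ?szu.
have zn : z n = 0 by rewrite /z nth_default ?szu.
have zsi i : z (s i) = y i 0.
  by rewrite /z permE /= (nth_map i) ?index_mem ?memt // nth_index.
pose x := \col_(j < n) ((j.+1)%:R * (z j - z j.+1)).
exists s, x; split.
  move=> i; rewrite mxE; apply: mulr_ge0 => //; rewrite subr_ge0.
  case: (ltnP i.+1 n) => h; first exact: zdec.
  have -> : i.+1 = n by apply/eqP; rewrite eqn_leq h ltn_ord.
  by rewrite zn.
apply/matrixP => i k; rewrite ord1.
rewrite /Bmx -mulmxA -row_permE mxE mxE.
symmetry.
transitivity (\sum_(j < n | (s i <= j)%N) (z j - z j.+1)).
  rewrite [RHS]big_mkcond /=; apply: eq_bigr => j _; rewrite /Wmx !mxE.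
  case: ifP => _; last by rewrite mul0r.
  by rewrite mulrA mulVf ?mul1r // pnatr_eq0.
have -> : \sum_(j < n | (s i <= j)%N) (z j - z j.+1) = \sum_(s i <= j < n) (z j - z j.+1).
  by rewrite big_geq_mkord; apply: eq_bigl => j.
rewrite (eq_bigr (fun j => - (z j.+1 - z j))); last by move=> j _; rewrite opprB.
by rewrite sumrN telescope_sumr ?zn ?sub0r ?opprK ?zsi // ltnW.
Qed.

Lemma cover (R : realFieldType) (n : nat) k (y : 'cV[R]_n) :
  (forall i, 0 <= y i 0) ->
  exists ss : seq 'S_n, exists x : 'cV[R]_n,
    size ss = k /\ (forall i, 0 <= x i 0) /\ y = Bprod R ss *m x.
Proof.
elim: k y => [|k IH] y hy.
  by exists [::], y; split; rewrite //= mul1mx.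
have [s [x1 [hx1 ->]]] := @coverB R n y hy.
have [ss [x [hs [hx ->]]]] := IH x1 hx1.
by exists (s :: ss), x; rewrite /= hs mulmxA.
Qed.

Theorem lemma2p2 (R : realFieldType) (n : nat) (F : {mpoly R[n]})
  (hF : exists d : nat, F \is d.-homog) :
  ((exists k : nat, (0 < k)%N /\
      (forall G : {mpoly R[n]}, in_SDS k F G -> forall m, 0 <= G@_m)) ->
    forall x : 'I_n -> R, (forall i, 0 <= x i) -> 0 <= F.@[x])
  /\
  ((exists (k : nat) (G : {mpoly R[n]}), (0 < k)%N /\ in_SDS k F G /\
       G.@[fun _ => 1] < 0) ->
    exists x : 'I_n -> R, (forall i, 0 <= x i) /\ F.@[x] < 0).
Proof.
split.
  move=> [k [_ Hk]] x hx.
  have [ss [x' [hs [hx' hy]]]] := @cover R n k (\col_i x i) (fun i => ltac:(by rewrite mxE)).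
  have hG := Hk _ (ex_intro _ ss (conj hs erefl)).
  have -> : F.@[x] = (lin_subst (Bprod R ss) F).@[fun j => x' j 0].
    rewrite eval_lin; apply: meval_eq => i.
    have := congr1 (fun M : 'cV[R]_n => M i 0) hy; rewrite /= !mxE => ->.
    by [].
  exact: eval_ge0.
move=> [k [G [_ [[ss [_ ->]] hG]]]].
exists (fun i => \sum_j Bprod R ss i j * 1); split.
  by move=> i; apply: sumr_ge0 => j _; rewrite mulr1 Bprod_ge0.
by rewrite -eval_lin.
Qed.
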